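(* Let $W\in\mathbb{D}_n$ be a Dale matrix satisfying the Ground Assumption, and let $\sigma\subset\mathcal{E}$ be nonempty. Then $\sigma\in\mathcal{C}(W)$ if and only if both (i) $\rho(W_{\mathcal{E_U}\cap\sigma})<1$ (spectral condition; with the convention that the spectral radius of the empty matrix is $0$) and (ii) $\sigma\in\mathrm{code}(G_{\mathcal{E}},\mathcal{E_U})$, i.e. $N^+_{G_\mathcal{E}}(\sigma)\cap\mathcal{E_U}\subset\sigma$ (graph condition).
   Context: Threshold-linear network: $\dot x_i=-x_i+[\sum_j W_{ij}x_j+b_i]_+$ with $[y]_+=\max(0,y)$; a fixed point is $x^*$ with $x^*=[Wx^*+b]_+$. A Dale matrix $W\in\mathbb{D}_n$ is an $n\times n$ real matrix with a partition $[n]=\mathcal{E}\sqcup\mathcal{I}$ such that $W_{ii}=0$, $W_{ji}\ge 0$ for all $j$ if $i\in\mathcal{E}$, and $W_{ji}\le0$ for all $j$ if $i\in\mathcal{I}$. Ground Assumption: $(I-W)_\sigma$ nonsingular for every nonempty $\sigma\subset[n]$. Excitatory support: $\mathrm{supp}_+x=\{i\in\mathcal{E}:x_i>0\}$. Combinatorial code: $\mathcal{C}(W)=\{\mathrm{supp}_+x^*: b\in\mathbb{R}^n_{\ge0},\ x^*\in\mathbb{R}^n_{\ge0}\text{ a fixed point of }(W,b)\}$. The excitatory connectivity graph $G_\mathcal{E}$ is the directed graph on vertex set $\mathcal{E}$ with an arc $i\to j$ iff $i\ne j$ and $W_{ji}>0$. The uninhibited set is $\mathcal{E_U}=\{j\in\mathcal{E}: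 W_{ji}=0\ \forall i\in\mathcal{I}\}$. For a directed graph $G$ on $\mathcal{E}$ and $\sigma\subset\mathcal{E}$, the out-neighborhood is $N^+_G(\sigma)=\bigcup_{i\in\sigma}\{j\in\mathcal{E}: i\to j\}$, and for $U\subset\mathcal{E}$, $\mathrm{code}(G,U)=\{\sigma\subset\mathcal{E}: N^+_G(\sigma)\cap U\subset\sigma\}$. $W_{\tau}$ is the principal submatrix on $\tau$ and $\rho$ denotes spectral radius. *)

(* Defs.v *)
From HB Require Import structures.
From mathcomp Require Import all_boot all_order all_algebra.
From mathcomp Require Import reals.
From mathcomp Require Import complex.
Set Implicit Arguments. Unset Strict Implicit. Unset Printing Implicit Defensive.
Import Order.TTheory GRing.Theory Num.Theory.
Local Open Scope ring_scope.

Section TLN.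
Variable R : realType.

(* principal submatrix W_sigma, rows/columns indexed by sigma (in increasing order) *)
Definition principal_submx n (A : 'M[R]_n) (s : {set 'I_n}) : 'M[R]_#|s| :=
  \matrix_(i < #|s|, j < #|s|) A (enum_val i) (enum_val j).

Definition eigenvaluesC k (A : 'M[R]_k) : seq R[i] :=
  sval (closed_field_poly_normal (char_poly (map_mx (fun x : R => x%:C%C) A))).

(* spectral radius: the maximal modulus of a complex eigenvalue (0 for the empty matrix) *)
Definition spectral_radius k (A : 'M[R]_k) : R :=
  \big[Num.max/0]_(z <- eigenvaluesC A) ComplexField.Normc.normc z.

(* W is a Dale matrix w.r.t. the partition [n] = E ⊔ ~: E (I = ~: E) *)
Definition dale n (W : 'M[R]_n) (E : {set 'I_n}) : Prop :=
  (forall i, W i i = 0) /\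
  (forall i j, i \in E -> 0 <= W j i) /\
  (forall i j, i \notin E -> W j i <= 0).

Definition ground_assumption n (W : 'M[R]_n) : Prop :=
  forall s : {set 'I_n}, s != set0 -> principal_submx (1%:M - W) s \in unitmx.

Definition is_fixed_point n (W : 'M[R]_n) (b x : 'cV[R]_n) : Prop :=
  forall i, x i 0 = Num.max 0 ((W *m x + b) i 0).

Definition supp_plus n (E : {set 'I_n}) (x : 'cV[R]_n) : {set 'I_n} :=
  [set i in E | 0 < x i 0].

Definition in_comb_code n (W : 'M[R]_n) (E : {set 'I_n}) (s : {set 'I_n}) : Prop :=
  exists b x : 'cV[R]_n,
    (forall i, 0 <= b i 0) /\ (forall i, 0 <= x i 0) /\
    is_fixed_point W b x /\ supp_plus E x = s.

Definition GE_arc n (W : 'M[R]_n) (E : {set 'I_n}) (i j : 'I_n) : bool :=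
  [&& i \in E, j \in E, i != j & 0 < W j i].

Definition uninhibited n (W : 'M[R]_n) (E : {set 'I_n}) : {set 'I_n} :=
  [set j in E | [forall i in ~: E, W j i == 0]].

Definition out_nbhd n (W : 'M[R]_n) (E : {set 'I_n}) (s : {set 'I_n}) : {set 'I_n} :=
  [set j in E | [exists i in s, GE_arc W E i j]].

Definition graph_code n (W : 'M[R]_n) (E U : {set 'I_n}) : {set {set 'I_n}} :=
  [set s : {set 'I_n} | (s \subset E) && (out_nbhd W E s :&: U \subset s)].

End TLN.

(* Main.v *)
Require Import Defs.
From HB Require Import structures.
From mathcomp Require Import all_boot all_order all_algebra.
From mathcomp Require Import reals.
From mathcomp Require Import complex.
From mathcomp Require Import ring lra.
Set Implicit Arguments. Unset Strict Implicit. Unset Printing Implicit Defensive.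
Import Order.TTheory GRing.Theory Num.Theory.
Local Open Scope ring_scope.

Section Real.
Variable R : realType.

Lemma bern (q : R) : 0 <= q -> q < 1 -> forall J : nat, q ^+ J * (1 + J%:R * (1 - q)) <= 1.
Proof.
move=> q0 q1; elim=> [|J IH]; first by rewrite expr0 mul0r addr0 mulr1.
rewrite exprS -mulrA.
have h1 : q ^+ J <= 1 by rewrite exprn_ile1 // ltW.
have h2 : 0 <= q ^+ J by apply: exprn_ge0.
rewrite -natr1.
set X := q ^+ J in IH h1 h2 *; set t := J%:R in IH *.
have h3 : 0 <= q * (1 - X * (1 + t * (1 - q))) by apply: mulr_ge0; lra.
have h4 : 0 <= (1 - q) * (1 - q * X).
  apply: mulr_ge0; first lra.
  have : q * X <= 1 * 1 by rewrite ler_pM // ltW.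
  lra.
nra.
Qed.

Lemma pow_small (q c e : R) : 0 <= q -> q < 1 -> 0 <= c -> 0 < e ->
  exists J : nat, forall j, (J <= j)%N -> q ^+ j * c <= e.
Proof.
move=> q0 q1 c0 e0.
have hx : 0 <= c / (e * (1 - q)).
  by apply: divr_ge0 => //; apply: mulr_ge0; lra.
exists (Num.Def.archi_bound (c / (e * (1 - q)))) => j hj.
have hb := archi_boundP hx.
have hj' : (Num.Def.archi_bound (c / (e * (1 - q))))%:R <= j%:R :> R by rewrite ler_nat.
have hB := bern q0 q1 j.
have hc : c <= j%:R * (e * (1 - q)).
  rewrite -ler_pdivrMr; last by apply: mulr_gt0; lra.
  lra.
have h2 : 0 <= q ^+ j by apply: exprn_ge0.
have h3 : 0 <= j%:R :> R by [].
nra.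
Qed.

Definition tends0 (a : nat -> R) := forall e, 0 < e -> exists M, forall m, (M <= m)%N -> a m <= e.

Lemma lim_rec (a b : nat -> R) (q : R) : 0 <= q -> q < 1 -> (forall m, 0 <= a m) ->
  (forall m, a m.+1 <= q * a m + b m) -> tends0 b -> tends0 a.
Proof.
move=> q0 q1 a0 hr hb e e0.
have [M hM] := hb (e * (1 - q) / 2) ltac:(apply: divr_gt0 => //; apply: mulr_gt0; lra).
have key : forall j, a (M + j)%N <= q ^+ j * a M + e / 2.
  elim=> [|j IH]; first by rewrite addn0 expr0 mul1r; lra.
  rewrite addnS; apply: le_trans (hr _) _.
  have := hM (M + j)%N (leq_addr _ _).
  rewrite exprS.
  nra.
have e2 : 0 < e / 2 by lra.
have [J hJ] := pow_small q0 q1 (a0 M) e2.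
exists (M + J)%N => m hm.
have -> : m = (M + (m - M))%N by rewrite subnKC // (leq_trans (leq_addr _ _) hm).
apply: le_trans (key _) _.
have := hJ (m - M)%N ltac:(by rewrite leq_subRL // ?(leq_trans (leq_addr _ _) hm)).
lra.
Qed.

Local Notation C := (R[i]).
Local Notation nc := (@Normc.normc R).

Lemma nc_ge0 (z : C) : 0 <= nc z.
Proof. by case: z => a b; rewrite /Normc.normc sqrtr_ge0. Qed.

Lemma ncD (x y : C) : nc (x + y) <= nc x + nc y.
Proof. exact: (@le_normcD R x y). Qed.

Lemma ncR (x : R) : nc (x%:C%C) = `|x|.
Proof. by rewrite /Normc.normc /= expr0n /= addr0 sqrtr_sqr. Qed.

Definition nrm k (v : 'cV[C]_k) : R := \sum_i nc (v i 0).

Lemma nrm_ge0 k (v : 'cV[C]_k) : 0 <= nrm v.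
Proof. by apply: sumr_ge0 => i _; apply: nc_ge0. Qed.

Lemma nrm0 k : nrm (0 : 'cV[C]_k) = 0.
Proof. by rewrite /nrm big1 // => i _; rewrite mxE Normc.normc0. Qed.

Lemma seq_step k (Y : nat -> 'cV[C]_k) (z : C) : nc z < 1 ->
  tends0 (fun m => nrm (Y m.+1 - z *: Y m)) -> tends0 (fun m => nrm (Y m)).
Proof.
move=> hz hb; apply: (lim_rec (q := nc z)) hb => //.
- exact: nc_ge0.
- by move=> m; apply: nrm_ge0.
- move=> m; rewrite /nrm mulr_sumr -big_split /=; apply: ler_sum => i _.
  have -> : Y m.+1 i 0 = z * Y m i 0 + (Y m.+1 - z *: Y m) i 0.
    by rewrite !mxE; ring.
  by apply: le_trans (ncD _ _) _; rewrite Normc.normcM.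
Qed.

Lemma prod_lim k (B : 'M[C]_k) (r : seq C) (v : 'cV[C]_k) :
  all (fun z => nc z < 1) r ->
  tends0 (fun m => nrm ((\prod_(z <- r) (B - z%:M)) *m (B ^+ m *m v))) ->
  tends0 (fun m => nrm (B ^+ m *m v)).
Proof.
elim: r => [|z r IH] /=; first by move=> _ h e e0; have [M hM] := h e e0; exists M => m /hM; rewrite big_nil mul1mx.
move=> /andP[hz hr] h; apply: IH => //; apply: (seq_step hz).
set P := \prod_(j <- r) (B - j%:M).
have cP : GRing.comm B P.
  apply: commr_prod => j _; apply: commrB; first exact: commr_refl.
  by rewrite /GRing.comm -!mulmxE scalar_mxC.
suff E : forall m, (\prod_(j <- z :: r) (B - j%:M)) *m (B ^+ m *m v) =
    P *m (B ^+ m.+1 *m v) - z *: (P *m (B ^+ m *m v)).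
  by move=> e e0; have [M hM] := h e e0; exists M => m hm; rewrite -E; exact: hM.
move=> m; rewrite big_cons -/P.
rewrite -mulmxE mulmxBl mul_scalar_mx mulmxBl -scalemxAl.
congr (_ - _); rewrite exprS !mulmxA; congr (_ *m _); congr (_ *m _).
by rewrite !mulmxE cP.
Qed.

Lemma sr_lt1 k (A : 'M[R]_k) :
  spectral_radius A < 1 <-> forall z, z \in eigenvaluesC A -> nc z < 1.
Proof.
split=> [h z hz|h].
  apply: le_lt_trans h; rewrite /spectral_radius.
  exact: (le_bigmax_seq 0 z xpredT (fun z : C => nc z) hz).
rewrite /spectral_radius big_seq_cond; apply: bigmax_lt => [|z /andP[hz _]]; [exact: ltr01 | exact: h].
Qed.

Lemma map_mxX k (A : 'M[R]_k) m :
  map_mx (real_complex R) (A ^+ m) = (map_mx (real_complex R) A) ^+ m.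
Proof.
elim: m => [|m IH]; first by rewrite !expr0 map_scalar_mx rmorph1.
by rewrite !exprS -!mulmxE map_mxM IH.
Qed.

Lemma pow_to_small k (A : 'M[R]_k.+1) :
  (forall z, z \in eigenvaluesC A -> nc z < 1) ->
  exists M, forall a, (A ^+ M *m (const_mx 1 : 'cV[R]_k.+1)) a 0 <= 1 / 2.
Proof.
move=> hA.
set B := map_mx (real_complex R) A.
have hp : char_poly B = \prod_(z <- eigenvaluesC A) ('X - z%:P).
  rewrite /eigenvaluesC; case: closed_field_poly_normal => r /= E.
  rewrite [LHS]E (monicP (char_poly_monic _)) scale1r.
  done.
have P0 : \prod_(z <- eigenvaluesC A) (B - z%:M) = 0.
  rewrite -(Cayley_Hamilton B) hp rmorph_prod; apply: eq_bigr => z _.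
  by rewrite rmorphB /= horner_mx_X horner_mx_C.
have hall : all (fun z => nc z < 1) (eigenvaluesC A) by apply/allP => z /hA.
have := @prod_lim _ B _ (const_mx 1) hall.
rewrite P0.
have h0 : tends0 (fun m => nrm ((0 : 'M[C]_k.+1) *m (B ^+ m *m (const_mx 1 : 'cV[C]_k.+1)))).
  by move=> e e0; exists 0%N => m _; rewrite mul0mx nrm0 ltW.
move=> /(_ h0) h.
have [M hM] := h (1/2) ltac:(lra).
exists M => a; have := hM M (leqnn _).
have -> : B ^+ M *m (const_mx 1 : 'cV[C]_k.+1) = map_mx (real_complex R) (A ^+ M *m (const_mx 1 : 'cV[R]_k.+1)).
  by rewrite map_mxM map_mxX map_const_mx rmorph1.
rewrite /nrm.
move=> H; apply: le_trans H.
rewrite (bigD1 a) //= [map_mx _ _ a 0]mxE ncR.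
apply: le_trans (ler_norm _) _.
rewrite lerDl; apply: sumr_ge0 => i _; exact: nc_ge0.
Qed.

Lemma Zarg k (A : 'M[R]_k) (x y : 'I_k -> R) :
  (forall i j, 0 <= A i j) -> (forall i, 0 < x i) ->
  (forall i, \sum_j A i j * x j <= x i) ->
  (forall i, 0 <= y i) -> (exists i, 0 < y i) ->
  (forall i, y i <= \sum_j A i j * y j) ->
  exists Z : {set 'I_k}, [/\ Z != set0, (forall i, i \in Z -> 0 < y i) &
     forall i, i \in Z -> y i = \sum_(j in Z) A i j * y j].
Proof.
move=> A0 x0 Ax y0 [i1 hi1] Ay.
have [i0 i0P hmin] : exists2 i0, 0 < y i0 & forall j, 0 < y j -> x i0 / y i0 <= x j / y j.
  by case: (@arg_minP _ _ _ i1 (fun i => 0 < y i) (fun i => x i / y i) hi1) => i Pi H; exists i.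
set c := x i0 / y i0.
have c0 : 0 < c by apply: divr_gt0.
have u0 : forall j, c * y j <= x j.
  move=> j; have [yj0|yj0] := eqVneq (y j) 0; first by rewrite yj0 mulr0 ltW.
  have yjp : 0 < y j by rewrite lt_def yj0 y0.
  by rewrite -ler_pdivlMr // hmin.
set Z := [set j | c * y j == x j].
have i0Z : i0 \in Z by rewrite inE /c divfK // gt_eqF.
have yZ : forall i, i \in Z -> 0 < y i.
  move=> i; rewrite inE => /eqP h.
  have := x0 i; rewrite -h; rewrite pmulr_rgt0 //.
exists Z; split => //; first by apply/set0Pn; exists i0.
move=> i iZ.
have hzero : forall j, A i j * (x j - c * y j) = 0.
  have hs : \sum_j A i j * (x j - c * y j) = 0.
    apply/eqP; rewrite eq_le; apply/andP; split; last first.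
      by apply: sumr_ge0 => j _; apply: mulr_ge0 => //; rewrite subr_ge0.
    have -> : \sum_j A i j * (x j - c * y j) = \sum_j A i j * x j - c * \sum_j A i j * y j.
      rewrite mulr_sumr -sumrB; apply: eq_bigr => j _; ring.
    have := Ax i; have := Ay i; move: iZ; rewrite inE => /eqP hci.
    have : c * y i <= c * \sum_j A i j * y j by rewrite ler_pM2l.
    lra.
  move=> j; move/eqP: hs; rewrite psumr_eq0 => [/allP h|]; last first.
    by move=> l _; apply: mulr_ge0 => //; rewrite subr_ge0.
  by apply/eqP; apply: (implyP (h j (mem_index_enum _))).
have split_y : \sum_j A i j * y j = \sum_(j in Z) A i j * y j.
  rewrite (bigID (fun j => j \in Z)) /= [X in _ + X]big1 ?addr0 // => j jZ.
  have : x j - c * y j != 0 by rewrite subr_eq0 eq_sym; move: jZ; rewrite inE.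
  by move=> hne; have := hzero j; move/eqP; rewrite mulf_eq0 (negbTE hne) orbF => /eqP ->; rewrite mul0r.
have split_x : \sum_(j in Z) A i j * (c * y j) = \sum_j A i j * x j.
  rewrite [RHS](bigID (fun j => j \in Z)) /= [X in _ + X]big1 ?addr0.
    by apply: eq_bigr => j; rewrite inE => /eqP ->.
  move=> j jZ.
  have : x j - c * y j != 0 by rewrite subr_eq0 eq_sym; move: jZ; rewrite inE.
  by move=> hne; have := hzero j; move/eqP; rewrite mulf_eq0 (negbTE hne) orbF => /eqP ->; rewrite mul0r.
apply/eqP; rewrite eq_le; apply/andP; split; first by rewrite -split_y.
have h1 : c * \sum_(j in Z) A i j * y j = \sum_(j in Z) A i j * (c * y j).
  by rewrite mulr_sumr; apply: eq_bigr => j _; ring.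
have := Ax i; rewrite -split_x -h1.
move: iZ; rewrite inE => /eqP <-.
by rewrite ler_pM2l.
Qed.

Lemma GA_contra n (W : 'M[R]_n) (Z : {set 'I_n}) (w : 'I_n -> R) :
  ground_assumption W -> Z != set0 -> (forall i, i \in Z -> 0 < w i) ->
  (forall i, i \in Z -> w i = \sum_(j in Z) W i j * w j) -> False.
Proof.
move=> GA Z0 wpos wfix.
have U := GA Z Z0.
set M := principal_submx (1%:M - W) Z.
set v : 'cV[R]_#|Z| := \col_a w (enum_val a).
have Mv : M *m v = 0.
  apply/matrixP => a b; rewrite !mxE.
  have -> : \sum_c M a c * v c b = \sum_(j in Z) (1%:M - W) (enum_val a) j * w j.
    rewrite (big_enum_val (A := mem Z)) /=; apply: eq_bigr => c _.
    by rewrite /M /v !mxE.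
  have eZ : enum_val a \in Z by apply: enum_valP.
  rewrite (eq_bigr (fun j => ((enum_val a == j)%:R * w j) - W (enum_val a) j * w j)); last first.
    by move=> j _; rewrite !mxE mulrBl.
  rewrite sumrB (bigD1 (enum_val a)) //= eqxx mul1r big1 ?addr0.
    by rewrite -wfix // subrr.
  by move=> j /andP[_ hj]; rewrite eq_sym (negbTE hj) mul0r.
have v0 : v = 0 by rewrite -(mulKmx U v) Mv mulmx0.
case/set0Pn: Z0 => j0 j0Z.
have := wpos j0 j0Z.
have : v (enum_rank_in j0Z j0) 0 = 0 by rewrite v0 mxE.
by rewrite mxE enum_rankK_in // => ->; rewrite ltxx.
Qed.

Lemma ncsum (I : finType) (F : I -> C) : nc (\sum_i F i) <= \sum_i nc (F i).
Proof.
elim/big_rec2: _ => [|i a b _ h]; first by rewrite Normc.normc0.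
by apply: le_trans (ncD _ _) _; rewrite lerD2l.
Qed.

Lemma char_prod k (A : 'M[R]_k) :
  char_poly (map_mx (real_complex R) A) = \prod_(z <- eigenvaluesC A) ('X - z%:P).
Proof.
rewrite /eigenvaluesC; case: closed_field_poly_normal => r /= E.
by rewrite [LHS]E (monicP (char_poly_monic _)) scale1r.
Qed.

Lemma eig_vec k (A : 'M[R]_k) (z : C) :
  (forall i j, 0 <= A i j) -> z \in eigenvaluesC A -> 1 <= nc z ->
  exists y : 'I_k -> R, [/\ forall i, 0 <= y i, exists i, 0 < y i &
     forall i, y i <= \sum_j A i j * y j].
Proof.
move=> A0 zin z1.
set B := map_mx (real_complex R) A.
have hroot : root (char_poly B) z by rewrite char_prod root_prod_XsubC.
have : eigenvalue B z by rewrite eigenvalue_root_char.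
case/eigenvalueP => v vB v0.
have : \det (z%:M - B) == 0.
  apply/det0P; exists v => //; by rewrite mulmxBr vB mul_mx_scalar subrr.
rewrite -det_tr => /det0P [u u0 uM].
have key : forall i, \sum_j B i j * u 0 j = z * u 0 i.
  move=> i; have := congr1 (fun M : 'rV[C]_k => M 0 i) uM; rewrite !mxE => h.
  apply/eqP; rewrite eq_sym -subr_eq0; apply/eqP; rewrite -[RHS]h.
  rewrite [in RHS](eq_bigr (fun j => (u 0 j * ((i == j)%:R * z)) - B i j * u 0 j)); last first.
    by move=> j _; rewrite !mxE; case: (i == j); rewrite /= ?mulr1n ?mulr0n; ring.
  rewrite sumrB; congr (_ - _).
  rewrite (bigD1 i) //= eqxx mul1r big1 ?addr0; first by rewrite mulrC.
  by move=> j hj; rewrite eq_sym (negbTE hj) mul0r mulr0.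
exists (fun i => nc (u 0 i)); split.
- by move=> i; apply: nc_ge0.
- have [i ui] : exists i, u 0 i != 0.
    apply/existsP; apply: contraNT u0 => /existsPn h; apply/eqP/matrixP => a b.
    by rewrite (ord1 a) mxE; apply/eqP; rewrite -[_ == _]negbK h.
  exists i; rewrite lt_def nc_ge0 andbT; apply: contra ui => /eqP h.
  by apply/eqP; apply: Normc.eq0_normc.
- move=> i.
  apply: (@le_trans _ _ (nc z * nc (u 0 i))).
    by rewrite ler_peMl // nc_ge0.
  rewrite -Normc.normcM -key; apply: le_trans (ncsum _) _.
  apply: ler_sum => j _; rewrite Normc.normcM /B mxE ncR ger0_norm //.
Qed.

Lemma pow_nonneg k (A : 'M[R]_k) m : (forall a b, 0 <= A a b) -> forall a b, 0 <= (A ^+ m) a b.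
Proof.
move=> A0; elim: m => [|m IH] a b.
  by rewrite expr0 mxE ler0n.
rewrite exprS -mulmxE mxE; apply: sumr_ge0 => c _; exact: mulr_ge0.
Qed.

Lemma geom k (A : 'M[R]_k) M :
  A * (\sum_(m < M) A ^+ m) + 1 = \sum_(m < M) A ^+ m + A ^+ M.
Proof.
elim: M => [|M IH]; first by rewrite big_ord0 mulr0 !add0r.
rewrite big_ord_recr /= mulrDr exprS -IH -!addrA; congr (_ + _); exact: addrC.
Qed.

Lemma addmxE' m n (X Y : 'M[R]_(m,n)) i j : (X + Y) i j = X i j + Y i j.
Proof. by rewrite mxE. Qed.

Lemma exists_sub k (A : 'M[R]_k) : (forall a b, 0 <= A a b) ->
  (forall z, z \in eigenvaluesC A -> nc z < 1) ->
  exists xk : 'I_k -> R, (forall a, 0 < xk a) /\ forall a, \sum_b A a b * xk b + 1 / 2 <= xk a.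
Proof.
case: k A => [|k] A A0 hz; first by exists (fun _ => 1); split => a; case: a.
have [M hM] := pow_to_small hz.
set S := \sum_(m < M) A ^+ m.
set v : 'cV[R]_k.+1 := const_mx 1.
have v0 : forall a b, 0 <= (S *m v) a b.
  move=> a b; rewrite mxE; apply: sumr_ge0 => c _; apply: mulr_ge0; last by rewrite mxE.
  rewrite /S summxE; apply: sumr_ge0 => m _; exact: pow_nonneg.
have key : forall a, (A *m (S *m v)) a 0 + 1 = (S *m v) a 0 + (A ^+ M *m v) a 0.
  move=> a.
  have E : (A * S + 1) *m v = (S + A ^+ M) *m v by rewrite geom.
  rewrite !mulmxDl mul1mx -mulmxE -mulmxA in E.
  have := congr1 (fun B : 'cV[R]_k.+1 => B a 0) E.
  by rewrite /= !addmxE' [v a 0]mxE.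
exists (fun a => (S *m v) a 0); split.
  move=> a; have := key a; have := hM a.
  have : 0 <= (A *m (S *m v)) a 0.
    rewrite mxE; apply: sumr_ge0 => c _; exact: mulr_ge0.
  lra.
move=> a; have := key a; have := hM a.
have e : (A *m (S *m v)) a 0 = \sum_b A a b * (S *m v) b 0 by rewrite mxE.
rewrite -e; lra.
Qed.

Lemma EUP n (W : 'M[R]_n) (E : {set 'I_n}) j : j \in uninhibited W E ->
  j \in E /\ forall i, i \notin E -> W j i = 0.
Proof.
rewrite inE => /andP[jE /forallP h]; split => // i iE.
by have := h i; rewrite inE iE /= => /eqP.
Qed.

Lemma fwd n (W : 'M[R]_n) (E s : {set 'I_n}) : dale W E -> ground_assumption W -> s \subset E ->
  in_comb_code W E s ->
  spectral_radius (principal_submx W (uninhibited W E :&: s)) < 1 /\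
  s \in graph_code W E (uninhibited W E).
Proof.
move=> [Wd [Wpos Wneg]] GA sE [b [x [b0 [x0 [fp supp]]]]].
have sP : forall i, (i \in s) = (i \in E) && (0 < x i 0) by move=> i; rewrite -supp inE.
set EU := uninhibited W E.
have term_nn : forall j l, j \in EU -> 0 <= W j l * x l 0.
  move=> j l /EUP [jE h]; case: (boolP (l \in E)) => lE.
    by apply: mulr_ge0; [exact: Wpos | exact: x0].
  by rewrite h // mul0r.
have input_ge : forall j (S : {set 'I_n}), j \in EU ->
    \sum_(l in S) W j l * x l 0 <= (W *m x + b) j 0.
  move=> j S jEU; rewrite addmxE' [(W *m x) j 0]mxE.
  apply: (@le_trans _ _ (\sum_l W j l * x l 0)); last by rewrite lerDl b0.
  rewrite [X in _ <= X](bigID (fun l => l \in S)) /= lerDl.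
  by apply: sumr_ge0 => l _; exact: term_nn.
have xfix : forall j, 0 < x j 0 -> x j 0 = (W *m x + b) j 0.
  move=> j; rewrite fp maxEle; case: ifP => //; by rewrite ltxx.
split; last first.
  rewrite inE sE /=; apply/subsetP => j; rewrite inE => /andP[jN jEU].
  move: jN; rewrite inE => /andP[jE /existsP[i /andP[iS /and4P[iE _ _ Wji]]]].
  rewrite sP jE /= fp lt_max; apply/orP; right.
  have xi : 0 < x i 0 by move: iS; rewrite sP => /andP[].
  apply: (@lt_le_trans _ _ (W j i * x i 0)); first exact: mulr_gt0.
  by have := input_ge j [set i] jEU; rewrite big_set1.
set U := EU :&: s.
set A := principal_submx W U.
apply/sr_lt1 => z zin; rewrite ltNge; apply/negP => z1.
have evU : forall a : 'I_#|U|, enum_val a \in U by move=> a; apply: enum_valP.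
have evEU : forall a : 'I_#|U|, enum_val a \in EU by move=> a; have := evU a; rewrite inE => /andP[].
have evs : forall a : 'I_#|U|, enum_val a \in s by move=> a; have := evU a; rewrite inE => /andP[].
have A0 : forall a c, 0 <= A a c.
  move=> a c; rewrite mxE; apply: Wpos; exact: (subsetP sE _ (evs c)).
have [y [y0 ypos yA]] := eig_vec A0 zin z1.
set xk := fun a : 'I_#|U| => x (enum_val a) 0.
have xpos : forall a, 0 < xk a by move=> a; have := evs a; rewrite sP => /andP[].
have Ax : forall a, \sum_c A a c * xk c <= xk a.
  move=> a; rewrite /xk xfix; last exact: xpos.
  have := input_ge (enum_val a) U (evEU a).
  rewrite (big_enum_val (A := mem U)) /=.
  by move=> h; apply: le_trans h; under eq_bigr do rewrite /A mxE.
have [Z [Z0 Zpos Zfix]] := Zarg A0 xpos Ax y0 ypos yA.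
set w := fun j => \sum_(a | (a \in Z) && (enum_val a == j)) y a.
have w_ev : forall a, a \in Z -> w (enum_val a) = y a.
  move=> a aZ; rewrite /w (big_pred1 a) // => a' /=.
  have [->|ne] := eqVneq a' a; first by rewrite aZ eqxx.
  by rewrite (inj_eq enum_val_inj) (negbTE ne) andbF.
apply: (@GA_contra n W [set enum_val a | a in Z] w GA).
- case/set0Pn: Z0 => a aZ; apply/set0Pn; exists (enum_val a); exact: imset_f.
- by move=> j /imsetP[a aZ ->]; rewrite w_ev //; exact: Zpos.
- move=> j /imsetP[a aZ ->]; rewrite w_ev // Zfix //.
  rewrite big_imset /=; last by move=> a1 a2 _ _; exact: enum_val_inj.
  by apply: eq_bigr => c cZ; rewrite w_ev // mxE.
Qed.

Lemma notEU n (W : 'M[R]_n) (E : {set 'I_n}) j : j \in E -> j \notin uninhibited W E ->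
  exists2 i, i \notin E & W j i != 0.
Proof.
move=> jE; rewrite inE jE /= => /forall_inPn [i iE Wne].
by exists i => //; move: iE; rewrite inE.
Qed.

Lemma bwd n (W : 'M[R]_n) (E s : {set 'I_n}) : dale W E -> s \subset E ->
  spectral_radius (principal_submx W (uninhibited W E :&: s)) < 1 ->
  s \in graph_code W E (uninhibited W E) -> in_comb_code W E s.
Proof.
move=> [Wd [Wpos Wneg]] sE /sr_lt1 hsr hg.
set EU := uninhibited W E.
set U := EU :&: s.
set A := principal_submx W U.
have evU : forall a : 'I_#|U|, enum_val a \in U by move=> a; apply: enum_valP.
have UEU : forall j, j \in U -> j \in EU by move=> j; rewrite inE => /andP[].
have Us : forall j, j \in U -> j \in s by move=> j; rewrite inE => /andP[].
have A0 : forall a c, 0 <= A a c.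
  move=> a c; rewrite mxE; apply: Wpos; exact: (subsetP sE _ (Us _ (evU c))).
have [xk [xkpos xkA]] := exists_sub A0 hsr.
pose xn := fun j => \sum_(a | enum_val a == j) xk a.
have xn_ev : forall a, xn (enum_val a) = xk a.
  move=> a; rewrite /xn (big_pred1 a) // => a' /=; exact: (inj_eq enum_val_inj).
have xn_out : forall j, j \notin U -> xn j = 0.
  move=> j jU; rewrite /xn big_pred0 // => a; apply: contraNF jU => /eqP <-; exact: evU.
have xn_nn : forall j, 0 <= xn j by move=> j; apply: sumr_ge0 => a _; exact: ltW.
have xn_pos : forall j, j \in U -> 0 < xn j.
  by move=> j jU; rewrite -(enum_rankK_in jU jU) xn_ev.
have sum_xn : forall F : 'I_n -> R, \sum_l F l * xn l = \sum_a F (enum_val a) * xk a.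
  move=> F; rewrite (bigID (fun l => l \in U)) /= [X in _ + X]big1 ?addr0; last first.
    by move=> l lU; rewrite xn_out // mulr0.
  rewrite (big_enum_val (A := mem U)) /=; apply: eq_bigr => a _; by rewrite xn_ev.
pose Cw := \sum_j \sum_l `|W j l|.
have rowC : forall j, \sum_l `|W j l| <= Cw.
  move=> j; rewrite /Cw [in X in _ <= X](bigD1 j) //= lerDl; apply: sumr_ge0 => i _.
  by apply: sumr_ge0 => l _; exact: normr_ge0.
have Cw0 : 0 <= Cw by apply: sumr_ge0 => i _; apply: sumr_ge0 => l _; exact: normr_ge0.
pose K := 2 * Cw + 2.
have K0 : 0 < K by rewrite /K; lra.
pose e := fun j => if j \in U then 0 else if j \in s then 1 else 0 : R.
pose xe := fun j => K * xn j + e j.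
have e01 : forall j, 0 <= e j <= 1 by move=> j; rewrite /e; case: ifP => _; [|case: ifP => _]; rewrite ?lexx ?ler01.
have xe_nn : forall j, 0 <= xe j.
  move=> j; have := e01 j; have := xn_nn j; rewrite /xe => h /andP[h1 _].
  by apply: addr_ge0 => //; apply: mulr_ge0 => //; exact: ltW.
have xe_out : forall j, j \notin s -> xe j = 0.
  move=> j js; have jU : j \notin U by apply: contra js; exact: Us.
  by rewrite /xe xn_out // /e (negbTE jU) (negbTE js) mulr0 addr0.
have xe_pos : forall j, j \in s -> 0 < xe j.
  move=> j js; rewrite /xe /e; case: ifP => jU.
    by rewrite addr0; apply: mulr_gt0 => //; exact: xn_pos.
  by rewrite js xn_out ?jU // mulr0 add0r ltr01.
pose S := fun j => \sum_l `|W j l| * xe l.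
pose d := fun j => \sum_l (if l \in E then 0 else - W j l).
have S_nn : forall j, 0 <= S j.
  by move=> j; apply: sumr_ge0 => l _; apply: mulr_ge0 => //; exact: normr_ge0.
have d_nn : forall j, 0 <= d j.
  move=> j; apply: sumr_ge0 => l _; case: ifP => lE //.
  by rewrite oppr_ge0; apply: Wneg; rewrite lE.
pose t := \sum_j (S j + S j / d j).
have t_ge : forall j, S j + S j / d j <= t.
  move=> j; rewrite /t (bigD1 j) //= lerDl; apply: sumr_ge0 => i _.
  by apply: addr_ge0 => //; apply: divr_ge0.
have t_nn : 0 <= t.
  by apply: sumr_ge0 => i _; apply: addr_ge0 => //; apply: divr_ge0.
pose x : 'cV[R]_n := \col_j (xe j + (if j \in E then 0 else t)).
have Wx : forall j, (W *m x) j 0 = \sum_l W j l * xe l - t * d j.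
  move=> j; rewrite mxE /d mulr_sumr -sumrN -big_split; apply: eq_bigr => l _.
  by rewrite mxE; case: (l \in E); rewrite /=; ring.
have WxeS : forall j, \sum_l W j l * xe l <= S j.
  by move=> j; apply: ler_sum => l _; apply: ler_wpM2r => //; exact: ler_norm.
have d0 : forall j, j \in EU -> d j = 0.
  move=> j /EUP [_ h]; apply: big1 => l _; case: ifP => lE //.
  by rewrite h ?lE // oppr0.
have inh : forall j, j \in E -> j \notin EU -> (W *m x) j 0 <= 0.
  move=> j jE jEU.
  have [i iE Wji] : exists2 i, i \notin E & W j i < 0.
    have [i iE Wne] := notEU jE jEU; exists i => //.
    by rewrite lt_neqAle Wne Wneg.
  have dpos : 0 < d j.
    apply: (@lt_le_trans _ _ (- W j i)); first by rewrite oppr_gt0.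
    rewrite /d (bigD1 i) //= (negbTE iE) lerDl; apply: sumr_ge0 => l _.
    by case: ifP => lE //; rewrite oppr_ge0 Wneg ?lE.
  have hS : S j <= t * d j.
    by rewrite -ler_pdivrMr //; have := t_ge j; have := S_nn j; lra.
  by rewrite Wx; have := WxeS j; lra.
have hsub : out_nbhd W E s :&: EU \subset s by move: hg; rewrite inE => /andP[].
have unin_out : forall j, j \in EU -> j \notin s -> (W *m x) j 0 <= 0.
  move=> j jEU js; rewrite Wx d0 // mulr0 subr0.
  apply: sumr_le0 => l _.
  case: (boolP (l \in s)) => ls; last by rewrite xe_out // mulr0.
  apply: mulr_le0_ge0 => //; rewrite leNgt; apply/negP => Wjl.
  have jE : j \in E by have [] := EUP jEU.
  have : j \in out_nbhd W E s :&: EU.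
    rewrite inE jEU andbT inE jE /=; apply/existsP; exists l; rewrite ls /=.
    rewrite /GE_arc (subsetP sE _ ls) jE Wjl /= andbT.
    by apply: contra js => /eqP <-.
  by move/(subsetP hsub); rewrite (negbTE js).
have inU : forall j, j \in U -> (W *m x) j 0 <= xe j - 1.
  move=> j jU; rewrite Wx d0 ?UEU // mulr0 subr0.
  have -> : \sum_l W j l * xe l = K * \sum_l W j l * xn l + \sum_l W j l * e l.
    rewrite mulr_sumr -big_split; apply: eq_bigr => l _; rewrite /xe /=; ring.
  rewrite sum_xn.
  have -> : j = enum_val (enum_rank_in jU j) by rewrite enum_rankK_in.
  set a0 := enum_rank_in jU j.
  have h1 : \sum_a W (enum_val a0) (enum_val a) * xk a + 1 / 2 <= xk a0.
    by have := xkA a0; under eq_bigr do rewrite mxE.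
  have h2 : \sum_l W (enum_val a0) l * e l <= Cw.
    apply: le_trans (rowC (enum_val a0)); apply: ler_sum => l _.
    have := e01 l; move=> /andP[h3 h4].
    apply: le_trans (ler_norm _) _; rewrite normrM [`|e l|]ger0_norm //.
    by rewrite ler_piMr ?normr_ge0.
  rewrite /xe /e evU addr0.
  rewrite xn_ev.
  have : K * (\sum_a W (enum_val a0) (enum_val a) * xk a + 1 / 2) <= K * xk a0.
    by rewrite ler_pM2l.
  rewrite /K; lra.
have xE : forall j, j \in E -> x j 0 = xe j by move=> j jE; rewrite mxE jE addr0.
have xnE : forall j, j \notin E -> x j 0 = t.
  move=> j jE; rewrite mxE (negbTE jE) xe_out ?add0r //.
  by apply: contra jE; exact: (subsetP sE).
have x_nn : forall j, 0 <= x j 0.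
  by move=> j; rewrite mxE; apply: addr_ge0 => //; case: ifP.
have bnn : forall j, (j \in s) || (j \notin E) -> (W *m x) j 0 <= x j 0.
  move=> j /orP[js|jE].
    have jE : j \in E := subsetP sE _ js.
    rewrite xE //; case: (boolP (j \in U)) => jU; first by have := inU j jU; lra.
    have jEU : j \notin EU by apply: contra jU => h; rewrite inE h js.
    have := inh j jE jEU; have := xe_pos j js; lra.
  rewrite xnE // Wx; have := WxeS j; have := t_ge j; have := d_nn j.
  have := S_nn j; have : 0 <= S j / d j by apply: divr_ge0.
  have : 0 <= t * d j by apply: mulr_ge0.
  lra.
pose b : 'cV[R]_n := \col_j (if (j \in s) || (j \notin E) then x j 0 - (W *m x) j 0 else 0).
exists b, x; split; [|split; [exact: x_nn|split]].
- move=> j; rewrite mxE; case: ifP => h //; rewrite subr_ge0; exact: bnn.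
- move=> j; rewrite addmxE' [b j 0]mxE; case: ifP => h.
    by rewrite addrC subrK max_r.
  move/negbT: h; rewrite negb_or negbK => /andP[js jE].
  rewrite addr0 xE // xe_out // max_l //.
  case: (boolP (j \in EU)) => jEU; first exact: unin_out.
  exact: inh.
- apply/setP => i; rewrite inE.
  case: (boolP (i \in E)) => iE /=; last by apply/esym; apply: contraNF iE; exact: (subsetP sE).
  rewrite xE //; case: (boolP (i \in s)) => iS; first by rewrite xe_pos.
  by rewrite xe_out // ltxx.
Qed.
End Real.

Unset Implicit Arguments.

Theorem mainTheorem4 (R : realType) (n : nat) (W : 'M[R]_n) (E : {set 'I_n})
    (s : {set 'I_n}) :
  dale W E -> ground_assumption W ->
  s \subset E -> s != set0 ->
  (in_comb_code W E s <->
     (spectral_radius (principal_submx W (uninhibited W E :&: s)) < 1 /\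
      s \in graph_code W E (uninhibited W E))).
Proof.
move=> hd GA sE _; split; first exact: fwd.
by case=> h1 h2; apply: bwd.
Qed.
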